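(* For any two simple graphs $G,F$ and any positive integer $k$, $$\mathrm{wsat}(G,F)\geq\frac{1}{k}\cdot\mathrm{rk}\text{-}\mathrm{sat}\left(G^k,\{F^k_e:\,e\in E(F)\}\right).$$
   Context: For a simple graph $G$, $G^k$ is the multigraph obtained from $G$ by taking $k$ instances of every edge. For $e\in E(F)$, $F^k_e$ is the multigraph on $V(F)$ containing each edge of $E(F)\setminus\{e\}$ exactly $k$ times and the edge $e$ exactly once. For simple graphs, $\mathrm{wsat}(G,F)$ is the minimum number of edges of a spanning subgraph $H\subseteq G$ from which $G$ can be obtained by adding the missing edges one at a time, each added edge creating a new copy of $F$ containing it. For a multigraph $G$ (edges are a multiset of pairs, distinct instances being distinct elements) and a family $\mathcal{F}$ of multigraphs, a matroid $M$ on $E(G)$ is weakly $\mathcal{F}$-saturated if every copy $\tilde F$ in $G$ of every $F\in\mathcal{F}$ is a cycle of $M$, i.e. $\mathrm{rk}_M(E(\tilde F)\setminus\{e\})=\mathrm{rk}_M(E(\tilde F))$ for all $e\in E(\tilde F)$; $\mathrm{rk}\text{-}\mathrm{sat}(G,\mathcal{F})$ is the maximum rank of such a matroid. *)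

(* Defs.v *)
From mathcomp Require Import all_boot.
From mathcomp Require Import boolp.

Set Implicit Arguments.
Unset Strict Implicit.
Unset Printing Implicit Defensive.

Definition simple_graph (V : finType) (E : {set {set V}}) : Prop :=
  forall e, e \in E -> #|e| = 2.

Definition is_copy (V W : finType) (EH : {set {set V}}) (EF : {set {set W}})
  (phi : W -> V) : Prop :=
  injective phi /\ forall f, f \in EF -> phi @: f \in EH.

Definition copy_edges (V W : finType) (EF : {set {set W}}) (phi : W -> V)
  : {set {set V}} := (fun f : {set W} => phi @: f) @: EF.

(* H is weakly F-saturated in G: H is a spanning subgraph of G and the
   missing edges can be added one at a time (in the order s), each added
   edge lying in a copy of F in the current graph. *)
Definition wsat_ok (V W : finType) (EG : {set {set V}}) (EF : {set {set W}})
  (H : {set {set V}}) : Prop :=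
  H \subset EG /\
  exists s : seq {set V},
    [/\ uniq s, [set x in s] = EG :\: H &
        forall i, i < size s ->
          exists phi : W -> V,
            is_copy (H :|: [set x in take i.+1 s]) EF phi /\
            nth set0 s i \in copy_edges EF phi].

(* wsat(G,F): minimum number of edges of a weakly F-saturated H in G
   (H = G always qualifies, so #|EG| is a valid initial value). *)
Definition wsat (V W : finType) (EG : {set {set V}}) (EF : {set {set W}}) : nat :=
  \big[minn/#|EG|]_(H : {set {set V}} | `[< wsat_ok EG EF H >]) #|H|.

Definition is_matroid (X : finType) (D : {set X}) (I : {set {set X}}) : Prop :=
  [/\ forall B : {set X}, B \in I -> B \subset D,
      set0 \in I,
      forall A B : {set X}, B \in I -> A \subset B -> A \in I &
      forall A B : {set X}, A \in I -> B \in I -> #|A| < #|B| ->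
        exists2 x, x \in B :\: A & x |: A \in I].

Definition mrank (X : finType) (I : {set {set X}}) (A : {set X}) : nat :=
  \max_(B in I | B \subset A) #|B|.

Definition is_cycle (X : finType) (I : {set {set X}}) (C : {set X}) : Prop :=
  forall x, x \in C -> mrank I (C :\ x) = mrank I C.

(* A multigraph on V: a finite set D of edge instances (in a finType X),
   each with an endpoint set ends x.  A copy of (W, DF, endsF) in
   (V, DG, endsG) is given by an injective vertex map phi and an injective
   edge-instance map psi compatible with endpoints; C is its edge set. *)
Definition mcopy (V W X Y : finType) (DG : {set X}) (endsG : X -> {set V})
  (DF : {set Y}) (endsF : Y -> {set W}) (C : {set X}) : Prop :=
  exists (phi : W -> V) (psi : Y -> X),
    [/\ injective phi, {in DF &, injective psi},
        forall y, y \in DF -> psi y \in DG /\ endsG (psi y) = phi @: endsF y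
      & C = psi @: DF].

(* G^k: edge instances (e, i), e in E(G), i < k; endpoints = fst. *)
Definition Gk_edges (V : finType) (k : nat) (EG : {set {set V}})
  : {set ({set V} * 'I_k)} := [set x | x.1 \in EG].

(* F^k_e: each edge of E(F) \ {e} k times, e exactly once (instance 0). *)
Definition Fke_edges (W : finType) (k : nat) (EF : {set {set W}}) (e : {set W})
  : {set ({set W} * 'I_k)} :=
  [set y | (y.1 \in EF :\ e) || ((y.1 == e) && (val y.2 == 0))].

Definition weakly_Fk_sat (V W : finType) (k : nat) (EG : {set {set V}})
  (EF : {set {set W}}) (I : {set {set ({set V} * 'I_k)}}) : Prop :=
  forall (e : {set W}) (C : {set ({set V} * 'I_k)}), e \in EF ->
    mcopy (Gk_edges k EG) fst (Fke_edges k EF e) fst C -> is_cycle I C.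

(* rk-sat(G^k, {F^k_e}): maximum rank of a weakly saturated matroid
   (the trivial matroid {set0} qualifies, so 0 is a valid initial value). *)
Definition rksat (V W : finType) (k : nat) (EG : {set {set V}})
  (EF : {set {set W}}) : nat :=
  \max_(I : {set {set ({set V} * 'I_k)}} |
          `[< is_matroid (Gk_edges k EG) I /\ weakly_Fk_sat EG EF I >])
    mrank I (Gk_edges k EG).

(* Main.v *)
Require Import Defs.
From mathcomp Require Import all_boot.
From mathcomp Require Import boolp.

Set Implicit Arguments.
Unset Strict Implicit.
Unset Printing Implicit Defensive.

Section Mat.
Variables (X : finType) (I : {set {set X}}).

Lemma mrank_le_card (A : {set X}) : mrank I A <= #|A|.
Proof. apply/bigmax_leqP => B /andP[_ sBA]; exact: subset_leq_card. Qed.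

Lemma mrank_mono (A A' : {set X}) : A \subset A' -> mrank I A <= mrank I A'.
Proof.
move=> sAA'; apply/bigmax_leqP => B /andP[BI sBA].
rewrite /mrank; apply: leq_bigmax_cond.
by rewrite BI (subset_trans sBA sAA').
Qed.

Lemma mrank_ge (B A : {set X}) : B \in I -> B \subset A -> #|B| <= mrank I A.
Proof.
move=> BI sBA.
rewrite /mrank; apply: leq_bigmax_cond.
by rewrite BI sBA.
Qed.

Lemma mrank_wit (D A : {set X}) : is_matroid D I ->
  exists2 B, (B \in I) && (B \subset A) & mrank I A = #|B|.
Proof.
case=> _ I0 _ _.
have P0 : (set0 \in I) && (set0 \subset A) by rewrite I0 sub0set.
rewrite /mrank (bigmax_eq_arg set0 P0).
case: arg_maxnP => // B PB _; by exists B.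
Qed.

Lemma augment_iter (D : {set X}) : is_matroid D I -> forall n J B,
  J \in I -> B \in I -> #|J| + n = #|B| ->
  exists J', [/\ J' \in I, J \subset J', J' \subset J :|: B & #|J'| = #|B|].
Proof.
move=> Im; case: (Im) => _ _ _ Aug.
elim=> [|n IH] J B JI BI hc.
  exists J; split => //; first exact: subsetUl.
  by rewrite -hc addn0.
have lt : #|J| < #|B| by rewrite -hc addnS ltnS leq_addr.
have [y yBJ yJI] := Aug _ _ JI BI lt.
move: yBJ; rewrite inE => /andP[yJ yB].
have cy : #|y |: J| + n = #|B| by rewrite cardsU1 yJ add1n addSnnS.
have [J' [J'I sJ sJ' cJ']] := IH _ _ yJI BI cy.
exists J'; split => //.
  exact: subset_trans (subsetUr _ _) sJ.
apply: (subset_trans sJ'); apply/subsetP => z; rewrite !inE.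
by case/orP => [/orP[/eqP->|->]|->]; rewrite ?yB ?orbT.
Qed.

Lemma span_lemma (D C A : {set X}) x : is_matroid D I -> x \in C ->
  C :\ x \subset A -> mrank I (C :\ x) = mrank I C ->
  mrank I (x |: A) = mrank I A.
Proof.
move=> Im xC sCA eqr.
apply/eqP; rewrite eqn_leq (mrank_mono (subsetUr _ _)) andbT.
have [B /andP[BI sB] rB] := mrank_wit (x |: A) Im.
have [J /andP[JI sJ] rJ] := mrank_wit (C :\ x) Im.
have JB : #|J| <= #|B|.
  rewrite -rB -rJ; apply: mrank_mono.
  exact: subset_trans sCA (subsetUr _ _).
have [J' [J'I sJJ' sJ' cJ']] :=
  @augment_iter D Im (#|B| - #|J|) J B JI BI (subnKC JB).
have xJ : x \notin J.
  by apply/negP => /(subsetP sJ); rewrite !inE eqxx.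
case: (boolP (x \in J')) => xJ'.
  case: (Im) => _ _ Sub _.
  have xJI : x |: J \in I.
    apply: (Sub _ J') => //; apply/subsetP => z; rewrite in_setU1.
    by case/orP => [/eqP->//|/(subsetP sJJ')].
  have : #|x |: J| <= mrank I C.
    apply: mrank_ge => //; apply/subsetP => z; rewrite in_setU1.
    case/orP => [/eqP->//|/(subsetP sJ)]; by rewrite inE => /andP[].
  by rewrite -eqr rJ cardsU1 xJ ltnn.
rewrite rB -cJ'; apply: mrank_ge => //.
apply/subsetP => z zJ'; have := subsetP sJ' z zJ'; rewrite inE.
case/orP => [/(subsetP sJ) zCx|/(subsetP sB)].
  exact: subsetP sCA z zCx.
rewrite in_setU1; case/orP => // /eqP ezx.
by move: xJ'; rewrite -ezx zJ'.
Qed.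

Lemma span_union (A B : {set X}) :
  (forall x (A' : {set X}), x \in B -> A \subset A' -> mrank I (x |: A') = mrank I A') ->
  mrank I (A :|: B) = mrank I A.
Proof.
move eqn : #|B| => n; elim: n B eqn => [|n IH] B cB hyp.
  by move/eqP: cB; rewrite cards_eq0 => /eqP ->; rewrite setU0.
have : 0 < #|B| by rewrite cB.
case/card_gt0P => x xB.
rewrite -(setD1K xB) setUCA hyp //; last exact: subsetUl.
apply: IH.
  by move: cB; rewrite (cardsD1 x B) xB add1n => -[].
by move=> y A' /setD1P[_ yB] sAA'; apply: hyp.
Qed.

End Mat.

Lemma main_bound (V W : finType) (EG : {set {set V}}) (EF : {set {set W}})
  (k : nat) H I : 0 < k -> wsat_ok EG EF H ->
  is_matroid (Gk_edges k EG) I -> weakly_Fk_sat EG EF I ->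
  mrank I (Gk_edges k EG) <= k * #|H|.
Proof.
move=> kpos [sHG [s [us defs Hs]]] Im Isat.
pose Lk (S : {set {set V}}) := [set x : {set V} * 'I_k | x.1 \in S].
have step : forall t, t < size s ->
   mrank I (Lk (H :|: [set x in take t.+1 s])) =
   mrank I (Lk (H :|: [set x in take t s])).
  move=> t ht.
  have [phi [[phi_inj phiE] st_in]] := Hs t ht.
  set st := nth set0 s t in st_in *.
  have [f fEF est] := imsetP st_in.
  have defT : take t.+1 s = rcons (take t s) st by rewrite (take_nth set0).
  have -> : Lk (H :|: [set x in take t.+1 s]) =
            Lk (H :|: [set x in take t s]) :|: Lk [set st].
    apply/setP => z; rewrite !inE defT mem_rcons in_cons.
    by case: (z.1 \in H); case: (z.1 == st); case: (z.1 \in take t s).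
  apply: span_union => -[x1 j] A'; rewrite !inE /= => /eqP ex1 sAA'.
  pose psi (y : {set W} * 'I_k) : {set V} * 'I_k :=
    if y.1 == f then (phi @: f, j) else (phi @: y.1, y.2).
  pose DF := Fke_edges k EF f.
  pose C := psi @: DF.
  have inDF y : y \in DF -> y.1 \in EF.
    by rewrite inE => /orP[/setD1P[]//|/andP[/eqP->]].
  have imG y : y \in DF -> phi @: y.1 \in EG.
    move/inDF/phiE; rewrite in_setU; case/orP => [/(subsetP sHG)//|].
    rewrite inE => /mem_take hs.
    have : phi @: y.1 \in [set x in s] by rewrite inE.
    by rewrite defs => /setDP[].
  have cycC : is_cycle I C.
    apply: (Isat f C fEF); exists phi, psi; split => //.
    - move=> y1 y2 y1D y2D; rewrite /psi.
      have h y : y \in DF -> y.1 == f -> y = (f, Ordinal kpos).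
        case: y => a b; rewrite inE /= => /orP[/setD1P[/negbTE ->]//|].
        case/andP => /eqP -> /eqP b0 _; congr pair; exact: val_inj.
      case: ifP => e1; case: ifP => e2.
      + by rewrite (h _ y1D e1) (h _ y2D e2).
      + by case=> /(imset_inj phi_inj) ef; move: e2; rewrite -ef eqxx.
      + by case=> /(imset_inj phi_inj) ef; move: e1; rewrite ef eqxx.
      + case: y1 y2 {y1D y2D e1 e2} => a1 b1 [a2 b2] /=.
        by case=> /(imset_inj phi_inj) -> ->.
    - move=> y yD; rewrite /psi inE; case: ifP => [/eqP ey|_] /=.
        by rewrite -ey; split => //; exact: imG _ yD.
      by split => //; exact: imG _ yD.
  have xC : (x1, j) \in C.
    apply/imsetP; exists (f, Ordinal kpos).
      by rewrite inE /= eqxx andbT orbT.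
    by rewrite /psi /= eqxx ex1 est.
  apply: (span_lemma Im xC); last exact: cycC.
  apply/subsetP => z /setD1P[zx /imsetP[y yD ez]]; apply: (subsetP sAA').
  move: zx; rewrite ez /psi; case: ifP => [_|ef _].
    by rewrite ex1 est eqxx.
  have := phiE _ (inDF _ yD); rewrite !inE /= defT mem_rcons in_cons.
  case/orP => [->//|/orP[/eqP e|->]]; last by rewrite orbT.
  by move: ef; rewrite est in e; rewrite (imset_inj phi_inj e) eqxx.
have all : forall t, t <= size s ->
   mrank I (Lk (H :|: [set x in take t s])) = mrank I (Lk H).
  elim => [|t IH] ht.
    rewrite take0; congr (mrank I (Lk _)).
    by apply/setP => z; rewrite !inE orbF.
  by rewrite step // IH // ltnW.
have := all _ (leqnn _); rewrite take_size.
have -> : H :|: [set x in s] = EG.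
  apply/setP => z; rewrite defs !inE.
  by case: (boolP (z \in H)) => // /(subsetP sHG) ->.
move=> eq; rewrite /Gk_edges; rewrite -/(Lk EG) eq.
apply: leq_trans (mrank_le_card _ _) _.
have -> : Lk H = setX H [set: 'I_k].
  by apply/setP => -[a b]; rewrite !inE andbT.
by rewrite cardsX cardsT card_ord mulnC.
Qed.

Theorem lemma3 (V W : finType) (EG : {set {set V}}) (EF : {set {set W}})
  (k : nat) :
  simple_graph EG -> simple_graph EF -> 0 < k ->
  rksat k EG EF <= k * wsat EG EF.
Proof.
move=> _ _ kpos.
rewrite /wsat.
apply: (big_ind (fun n => rksat k EG EF <= k * n)).
- apply/bigmax_leqP => I _; apply: leq_trans (mrank_le_card _ _) _.
  rewrite /Gk_edges.
  have -> : [set x : {set V} * 'I_k | x.1 \in EG] = setX EG [set: 'I_k].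
    by apply/setP => -[a b]; rewrite !inE andbT.
  by rewrite cardsX cardsT card_ord mulnC.
- by move=> a b ha hb; rewrite minnMr leq_min ha hb.
- move=> H /asboolP hH; apply/bigmax_leqP => I /asboolP[Im Is].
  exact: (main_bound kpos hH Im Is).
Qed.
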